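(* Let $R$ be a finite commutative chain ring with maximal ideal $\langle a\rangle$, $a$ of nilpotency index $t$, residue field $\mathbb F_q$ of characteristic $p$. Let $e_1,\dots,e_r$ be positive integers not divisible by $p$, $I=\langle X_1^{e_1}-1,\dots,X_r^{e_r}-1\rangle$, $A=R[X_1,\dots,X_r]/I$, and let $\tau$ be the ring automorphism of $A$ given by $\tau(f(X_1,\dots,X_r)+I)=f(X_1^{e_1-1},\dots,X_r^{e_r-1})+I$. Let $\mathcal K$ be an ideal of $A$ and $G_0,\dots,G_t\in R[X_1,\dots,X_r]$ polynomials such that $\bigcap_{i=0}^t\mathrm{Ann}_A\langle G_i+I\rangle=0$, $\mathrm{Ann}_A\langle G_i+I\rangle+\mathrm{Ann}_A\langle G_j+I\rangle=A$ for all $0\le i<j\le t$, and $\mathcal K=\langle G_1,aG_2,\dots,a^{t-1}G_t\rangle+I$. Then $$\mathcal K^\perp=\langle\tau(G_0),a\tau(G_t),\dots,a^{t-1}\tau(G_2)\rangle+I,$$ and the polynomials $\tau(G_0),\dots,\tau(G_t)$ also satisfy $\bigcap_{i}\mathrm{Ann}_A\langle\tau(G_i)+I\rangle=0$ and pairwise comaximality of the annihilators $\mathrm{Ann}_A\langle \tau(G_i)+I\rangle$.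
   Context: $\tau(G_i)$ denotes $G_i(X_1^{e_1-1},\dots,X_r^{e_r-1})$. $A$ is a free $R$-module with basis the monomials $X_1^{i_1}\cdots X_r^{i_r}$, $0\le i_k<e_k$; elements are identified with coefficient vectors in $R^n$, $n=e_1\cdots e_r$. For $\mathbf x,\mathbf y\in R^n$, $\mathbf x\cdot\mathbf y=\sum_k x_ky_k$, and for a code $\mathcal K$, $\mathcal K^\perp=\{\mathbf x:\mathbf x\cdot\mathbf c=0\ \forall\mathbf c\in\mathcal K\}$. *)

(* Defs.v *)
From HB Require Import structures.
From mathcomp Require Import all_boot all_order all_algebra.
From mathcomp Require Import mpoly.

Set Implicit Arguments.
Unset Strict Implicit.
Unset Printing Implicit Defensive.
Import GRing.Theory.
Local Open Scope ring_scope.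

Section Defs.
Context (R : comRingType) (r : nat) (e : 'I_r -> nat).
Implicit Types (f g G : {mpoly R[r]}).

Definition inI f : Prop :=
  exists h : 'I_r -> {mpoly R[r]}, f = \sum_(k < r) h k * ('X_k ^+ e k - 1).

(** Preimage in R[X] of the ideal <gs> + I of A (as a predicate on polys) *)
Definition genIdeal (gs : seq {mpoly R[r]}) f : Prop :=
  exists (c : 'I_(size gs) -> {mpoly R[r]}) (h : 'I_r -> {mpoly R[r]}),
    f = \sum_(j < size gs) c j * gs`_j + \sum_(k < r) h k * ('X_k ^+ e k - 1).

Definition annA G f : Prop := forall y, genIdeal [:: G] y -> inI (f * y).

Definition annComax G H : Prop :=
  exists u v, annA G u /\ annA H v /\ inI (u + v - 1).

Definition tau G : {mpoly R[r]} :=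
  G \mPo [tuple 'X_i ^+ (e i).-1 | i < r].

(** reduction to the canonical representative: exponents taken mod e_k,
    i.e. the element of A written in the monomial basis X^i, 0 <= i_k < e_k *)
Definition redI f : {mpoly R[r]} :=
  \sum_(m <- msupp f) f@_m *: 'X_[[multinom (m i %% e i)%N | i < r]].

Definition dotA f g : R :=
  \sum_(m <- msupp (redI f)) (redI f)@_m * (redI g)@_m.

Definition perpA (K : {mpoly R[r]} -> Prop) f : Prop :=
  forall c, K c -> dotA f c = 0.

End Defs.

Definition chain_ring_max (R : finComUnitRingType) (a : R) : Prop :=
  (forall x y : R, (exists z, y = x * z) \/ (exists z, x = y * z)) /\
  (forall x : R, x \isn't a GRing.unit <-> exists y, x = a * y).

(* Main.v *)
Require Import Defs.
From HB Require Import structures.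
From mathcomp Require Import all_boot all_order all_algebra.
From mathcomp Require Import mpoly ssrcomplements.
From mathcomp Require Import ring zify.
Set Implicit Arguments.
Unset Strict Implicit.
Unset Printing Implicit Defensive.
Import GRing.Theory.
Local Open Scope ring_scope.
Section Basics.
Variable R : finComUnitRingType.
Variable r : nat.
Variable e : 'I_r -> nat.
Hypothesis he0 : forall k, (0 < e k)%N.
Local Notation P := {mpoly R[r]}.
Local Notation Z := (@inI R r e).

Lemma Z0 : Z 0.
Proof. by exists (fun _ => 0); rewrite big1 // => k _; rewrite mul0r. Qed.

Lemma ZD f g : Z f -> Z g -> Z (f + g).
Proof.
move=> [h1 ->] [h2 ->]; exists (fun k => h1 k + h2 k).
by rewrite -big_split /=; apply: eq_bigr => k _; rewrite mulrDl.
Qed.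

Lemma ZM g f : Z f -> Z (g * f).
Proof.
move=> [h ->]; exists (fun k => g * h k).
by rewrite mulr_sumr; apply: eq_bigr => k _; rewrite mulrA.
Qed.

Lemma ZMr g f : Z f -> Z (f * g).
Proof. by rewrite mulrC; apply: ZM. Qed.

Lemma ZN f : Z f -> Z (- f).
Proof. by move=> /(ZM (-1)); rewrite mulN1r. Qed.

Lemma ZB f g : Z f -> Z g -> Z (f - g).
Proof. by move=> hf /ZN; apply: ZD. Qed.

Lemma ZZ c f : Z f -> Z (c *: f).
Proof. by rewrite -mul_mpolyC; apply: ZM. Qed.

Lemma Zsum (I : Type) (s : seq I) (Q : pred I) (F : I -> P) :
  (forall i, Q i -> Z (F i)) -> Z (\sum_(i <- s | Q i) F i).
Proof. by move=> h; apply: (big_ind Z) => //; [exact: Z0 | exact: ZD]. Qed.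

Lemma ZX k : Z ('X_k ^+ e k - 1).
Proof.
exists (fun j => (j == k)%:R); rewrite (bigD1 k) //= eqxx mul1r big1 ?addr0 //.
by move=> j /negbTE ->; rewrite mul0r.
Qed.

Lemma Zexp1 u n : Z (u - 1) -> Z (u ^+ n - 1).
Proof.
move=> hu; elim: n => [|n IH]; first by rewrite expr0 subrr; exact: Z0.
have -> : u ^+ n.+1 - 1 = u ^+ n * (u - 1) + (u ^+ n - 1) by rewrite exprS; ring.
by apply: ZD => //; apply: ZM.
Qed.

Lemma Zprod1 (I : Type) (s : seq I) (F : I -> P) :
  (forall i, Z (F i - 1)) -> Z (\prod_(i <- s) F i - 1).
Proof.
move=> h; apply: (big_ind (fun x => Z (x - 1))); first by rewrite subrr; exact: Z0.
  move=> x y hx hy; have -> : x * y - 1 = x * (y - 1) + (x - 1) by ring.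
  by apply: ZD => //; apply: ZM.
by move=> i _; apply: h.
Qed.

Definition Phi (phi : 'X_{1..r} -> P) (f : P) : P :=
  \sum_(m <- msupp f) f@_m *: phi m.

Lemma PhiE phi k f : (msize f <= k)%N ->
  Phi phi f = \sum_(m : 'X_{1..r < k}) f@_m *: phi m.
Proof.
move=> lt_pk; pose I : subFinType _ := 'X_{1..r < k}.
rewrite /Phi (big_mksub I) //=; last first.
- by move=> x /msize_mdeg_lt h; exact: leq_trans h lt_pk.
- by rewrite msupp_uniq.
by rewrite big_rmcond //= => i; move/memN_msupp_eq0 ->; rewrite scale0r.
Qed.

Lemma PhiD phi f g : Phi phi (f + g) = Phi phi f + Phi phi g.
Proof.
pose k := maxn (msize (f + g)) (maxn (msize f) (msize g)).
rewrite (PhiE phi (k := k)); last by rewrite /k; lia.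
rewrite (PhiE phi (k := k) (f := f)); last by rewrite /k; lia.
rewrite (PhiE phi (k := k) (f := g)); last by rewrite /k; lia.
by rewrite -big_split /=; apply: eq_bigr => m _; rewrite mcoeffD scalerDl.
Qed.

Lemma PhiZ phi c f : Phi phi (c *: f) = c *: Phi phi f.
Proof.
pose k := maxn (msize (c *: f)) (msize f).
rewrite (PhiE phi (k := k)); last by rewrite /k; lia.
rewrite (PhiE phi (k := k) (f := f)); last by rewrite /k; lia.
rewrite scaler_sumr.
by apply: eq_bigr => m _; rewrite mcoeffZ scalerA.
Qed.

Lemma Phi0 phi : Phi phi 0 = 0.
Proof. by rewrite /Phi msupp0 big_nil. Qed.

Lemma PhiX phi m : Phi phi 'X_[m] = phi m.
Proof. by rewrite /Phi msuppX big_seq1 mcoeffX eqxx scale1r. Qed.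

Lemma Phi_sum phi (I : Type) (s : seq I) (F : I -> P) :
  Phi phi (\sum_(i <- s) F i) = \sum_(i <- s) Phi phi (F i).
Proof. exact: (big_morph _ (PhiD phi) (Phi0 phi)). Qed.

Lemma PhiB phi f g : Phi phi (f - g) = Phi phi f - Phi phi g.
Proof. by rewrite PhiD -scaleN1r PhiZ scaleN1r. Qed.

Definition redm (m : 'X_{1..r}) : 'X_{1..r} := [multinom (m i %% e i)%N | i < r].
Definition red (f : P) : P := Phi (fun m => 'X_[redm m]) f.

Lemma redIE f : redI e f = red f. Proof. by []. Qed.

Lemma redX m : red 'X_[m] = 'X_[redm m]. Proof. exact: PhiX. Qed.

Lemma red_mulXe g k : red (g * 'X_k ^+ e k) = red g.
Proof.
rewrite {1}[g]mpolyE mulr_suml /red Phi_sum [in RHS]/Phi.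
apply: eq_bigr => m _; rewrite -scalerAl PhiZ mpolyXn -mpolyXD PhiX.
congr (_ *: 'X_[_]); apply/mnmP => i; rewrite !mnmE mulmnE mnm1E.
by case: (k =P i) => [->|_]; rewrite ?mul1n ?mul0n ?addn0 ?modnDr.
Qed.

Lemma red_I f : Z f -> red f = 0.
Proof.
move=> [h ->]; rewrite /red Phi_sum big1 // => k _.
by rewrite mulrBr mulr1 PhiB -/(red _) red_mulXe subrr.
Qed.

Lemma Xcong (m m' : 'X_{1..r}) : (forall i, m i %% e i = m' i %% e i)%N -> Z ('X_[m] - 'X_[m']).
Proof.
have key : forall m, Z ('X_[m] - 'X_[redm m]).
  move=> {}m; pose q := [multinom (m i %/ e i * e i)%N | i < r].
  have -> : m = (redm m + q)%MM.
    by apply/mnmP => i; rewrite mnmDE !mnmE addnC -divn_eq.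
  have -> : redm (redm m + q)%MM = redm m.
    apply/mnmP => i; rewrite !mnmE.
    by rewrite addnC modnMDl modn_mod.
  rewrite mpolyXD; have -> : 'X_[redm m] * 'X_[q] - 'X_[redm m] =
     'X_[redm m] * ('X_[q] - 1) :> P by ring.
  apply: ZM; rewrite mpolyXE_id; apply: Zprod1 => i.
  by rewrite mnmE mulnC exprM; apply: Zexp1; apply: ZX.
move=> h; have e1 : redm m = redm m'.
  by apply/mnmP => i; rewrite !mnmE h.
have -> : 'X_[m] - 'X_[m'] = ('X_[m] - 'X_[redm m]) - ('X_[m'] - 'X_[redm m']) :> P.
  by rewrite e1; ring.
by apply: ZB; apply: key.
Qed.
End Basics.
Section Dual.
Variable R : finComUnitRingType.
Variable r : nat.
Variable e : 'I_r -> nat.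
Hypothesis he0 : forall k, (0 < e k)%N.
Local Notation P := {mpoly R[r]}.
Local Notation Z := (@inI R r e).
Local Notation red := (@red R r e).
Local Notation redm := (@redm r e).

Lemma Z_red f : Z (f - red f).
Proof.
rewrite {1}[f]mpolyE /red /Phi -sumrB; apply: Zsum => m _.
rewrite -scalerBr; apply: ZZ; apply: Xcong => i.
by rewrite mnmE modn_mod.
Qed.

Lemma red_Z f : red f = 0 -> Z f.
Proof. by move=> h; have := Z_red f; rewrite h subr0. Qed.

Lemma redB f g : red (f - g) = red f - red g.
Proof. exact: PhiB. Qed.
Lemma redD f g : red (f + g) = red f + red g.
Proof. exact: PhiD. Qed.
Lemma redZ c f : red (c *: f) = c *: red f.
Proof. exact: PhiZ. Qed.

Lemma red_cong f g : Z (f - g) -> red f = red g.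
Proof. by move=> /(red_I (R:=R)); rewrite redB => /eqP; rewrite subr_eq0 => /eqP. Qed.

Definition Kb := (\sum_i e i).+1.

Lemma mdeg_redm m : (mdeg (redm m) < Kb)%N.
Proof.
rewrite /Kb ltnS mdegE; apply: leq_sum => i _; rewrite mnmE.
by apply: ltnW; rewrite ltn_mod.
Qed.

Lemma redmK m : redm (redm m) = redm m.
Proof. by apply/mnmP => i; rewrite !mnmE modn_mod. Qed.

Lemma red_supp f m : m \in msupp (red f) -> redm m = m.
Proof.
move=> /msupp_sum_le; rewrite filter_predT => /flatten_mapP [m' _].
by move=> /msuppZ_le; rewrite msuppX mem_seq1 => /eqP ->; rewrite redmK.
Qed.

Lemma red_supp_deg f m : m \in msupp (red f) -> (mdeg m < Kb)%N.
Proof. by move=> /red_supp <-; apply: mdeg_redm. Qed.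

Local Notation B := ('X_{1..r < Kb}).

Definition D f g : R := \sum_(m : B) (red f)@_m * (red g)@_m.

Lemma dotA_D f g : dotA e f g = D f g.
Proof.
rewrite /dotA -!/(redI e _) !redIE.
pose I : subFinType _ := B.
rewrite (big_mksub I) //=; last first.
- by move=> x /red_supp_deg.
- by rewrite msupp_uniq.
rewrite /D big_rmcond //= => i; move/memN_msupp_eq0 ->; by rewrite mul0r.
Qed.

Lemma DC f g : D f g = D g f.
Proof. by apply: eq_bigr => m _; rewrite mulrC. Qed.

Lemma DDl f g c : D (f + g) c = D f c + D g c.
Proof. by rewrite /D -big_split; apply: eq_bigr => m _; rewrite redD mcoeffD mulrDl. Qed.

Lemma DZl a f c : D (a *: f) c = a * D f c.
Proof. by rewrite /D mulr_sumr; apply: eq_bigr => m _; rewrite redZ mcoeffZ mulrA. Qed.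

Lemma DDr f g c : D c (f + g) = D c f + D c g.
Proof. by rewrite !(DC c) DDl. Qed.

Lemma DZr a f c : D c (a *: f) = a * D c f.
Proof. by rewrite !(DC c) DZl. Qed.

Lemma mono_ext (F1 F2 : P -> R) :
  (forall f g, F1 (f + g) = F1 f + F1 g) -> (forall a f, F1 (a *: f) = a * F1 f) ->
  (forall f g, F2 (f + g) = F2 f + F2 g) -> (forall a f, F2 (a *: f) = a * F2 f) ->
  (forall m, F1 'X_[m] = F2 'X_[m]) -> forall f, F1 f = F2 f.
Proof.
move=> D1 Z1 D2 Z2 hm f; rewrite [f]mpolyE.
elim: (msupp f) => [|m s IH].
  by rewrite big_nil -(scale0r (0 : P)) Z1 Z2 !mul0r.
by rewrite !big_cons D1 D2 Z1 Z2 hm IH.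
Qed.

Local Notation tau := (@tau R r e).
Definition tm (m : 'X_{1..r}) : 'X_{1..r} := [multinom ((e i).-1 * m i)%N | i < r].

Lemma tauX m : tau 'X_[m] = 'X_[tm m].
Proof.
rewrite /tau comp_mpolyX [RHS]mpolyXE_id; apply: eq_bigr => i _.
by rewrite tnth_map tnth_ord_tuple mnmE exprM.
Qed.

Lemma tauD f g : tau (f + g) = tau f + tau g. Proof. by rewrite /tau rmorphD. Qed.
Lemma tauB f g : tau (f - g) = tau f - tau g. Proof. by rewrite /tau rmorphB. Qed.
Lemma tauM f g : tau (f * g) = tau f * tau g. Proof. by rewrite /tau rmorphM. Qed.
Lemma tau1 : tau 1 = 1. Proof. by rewrite /tau rmorph1. Qed.
Lemma tauZ c f : tau (c *: f) = c *: tau f. Proof. by rewrite /tau comp_mpolyZ. Qed.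
Lemma tau_sum (I : Type) (s : seq I) (Q : pred I) (F : I -> P) :
  tau (\sum_(i <- s | Q i) F i) = \sum_(i <- s | Q i) tau (F i).
Proof. by rewrite /tau rmorph_sum. Qed.

Lemma Z_tau f : Z f -> Z (tau f).
Proof.
move=> [h ->]; rewrite tau_sum; apply: Zsum => k _; rewrite tauM; apply: ZM.
rewrite tauB tau1 mpolyXn tauX -mpolyX0; apply: Xcong => i.
rewrite !mnmE mulmnE mnm1E mod0n.
by case: (k =P i) => [->|_]; rewrite ?mul1n ?mul0n ?muln0 ?modnMl ?mod0n.
Qed.

Lemma tm_mod (k m : nat) : (0 < k)%N -> (k.-1 * (k.-1 * m) = m %[mod k])%N.
Proof.
case: k => // k _ /=; rewrite mulnA -modnMml.
have -> : ((k * k) %% k.+1 = 1 %% k.+1)%N.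
  by rewrite -(modnDr (k * k)%N) -[in RHS](modnMDl k 1); congr (_ %% _)%N; lia.
by rewrite modnMml mul1n.
Qed.

Lemma tautau f : Z (tau (tau f) - f).
Proof.
rewrite {1 2}[f]mpolyE (@tau_sum _ _ _ (fun m => f@_m *: 'X_[m])) tau_sum -sumrB.
apply: Zsum => m _.
rewrite !tauZ -scalerBr; apply: ZZ; rewrite !tauX; apply: Xcong => i.
by rewrite !mnmE tm_mod.
Qed.

Lemma tau_cong f g : Z (f - g) -> Z (tau f - tau g).
Proof. by rewrite -tauB; apply: Z_tau. Qed.

Definition L f : R := (red f)@_0%MM.

Lemma redm_tm (m1 m2 : 'X_{1..r}) :
  (redm (m1 + tm m2)%MM == 0%MM) = (redm m1 == redm m2).
Proof.
apply/eqP/eqP => h; apply/mnmP => i.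
- have := congr1 (fun m : 'X_{1..r} => m i) h; rewrite /= !mnmE.
  have := he0 i; case: (e i) => // k _ /= {}h.
  apply/eqP; rewrite -(eqn_modDr (k * m2 i)%N) -mulSn modnMr.
  by rewrite h.
- have := congr1 (fun m : 'X_{1..r} => m i) h; rewrite /= !mnmE.
  have := he0 i; case: (e i) => // k _ /= {}h.
  by rewrite -modnDml h modnDml -mulSn modnMr.
Qed.

Lemma D_mono m1 m2 : D 'X_[m1] 'X_[m2] = (redm m1 == redm m2)%:R.
Proof.
rewrite /D (bigD1 (Sub (redm m1) (mdeg_redm m1) : B)) //= !redX !mcoeffX eqxx mul1r.
rewrite big1 ?addr0 1?eq_sym // => m /eqP hne; rewrite !mcoeffX.
case: eqP => [h|]; last by rewrite mul0r.
by case: hne; apply: val_inj.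
Qed.

Lemma D1 f c : D f c = L (f * tau c).
Proof.
move: f; apply: (mono_ext (F1 := fun f => D f c) (F2 := fun f => L (f * tau c))).
- by move=> f g; apply: DDl.
- by move=> a f; apply: DZl.
- by move=> f g; rewrite /L mulrDl redD mcoeffD.
- by move=> a f; rewrite /L -scalerAl redZ mcoeffZ.
move=> m1; move: c.
apply: (mono_ext (F1 := fun c => D 'X_[m1] c) (F2 := fun c => L ('X_[m1] * tau c))).
- by move=> f g; apply: DDr.
- by move=> a f; apply: DZr.
- by move=> f g; rewrite /L tauD mulrDr redD mcoeffD.
- by move=> a f; rewrite /L tauZ -scalerAr redZ mcoeffZ.
move=> m2; rewrite D_mono /L tauX -mpolyXD redX mcoeffX.
by rewrite redm_tm.
Qed.

Lemma D3 z m : (red z)@_(redm m) = D z 'X_[m].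
Proof.
rewrite /D (bigD1 (Sub (redm m) (mdeg_redm m) : B)) //= !redX !mcoeffX eqxx mulr1.
rewrite big1 ?addr0 // => m' /eqP hne; rewrite !mcoeffX.
case: eqP => [h|]; last by rewrite mulr0.
by case: hne; apply: val_inj.
Qed.

Lemma Z_of_D y : (forall m, D y 'X_[m] = 0) -> Z y.
Proof.
move=> h; apply: red_Z; apply/mpolyP => m; rewrite mcoeff0.
case: (boolP (m \in msupp (red y))) => [hm|/memN_msupp_eq0 //].
by rewrite -(red_supp hm) D3 h.
Qed.

Lemma L_Z f : Z f -> L f = 0.
Proof. by move=> /(red_I (R:=R)); rewrite /L => ->; rewrite mcoeff0. Qed.

End Dual.
Section GenSec.
Variable R : finComUnitRingType.
Variable r : nat.
Variable e : 'I_r -> nat.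
Local Notation P := {mpoly R[r]}.
Local Notation Z := (@inI R r e).

Definition Gen (gs : seq P) (f : P) :=
  exists c : 'I_(size gs) -> P, Z (f - \sum_(j < size gs) c j * gs`_j).

Lemma genIdeal_Gen gs f : genIdeal e gs f <-> Gen gs f.
Proof.
split.
  move=> [c [h ->]]; exists c; rewrite addrC addKr; by exists h.
move=> [c [h hf]]; exists c, h; by rewrite -hf addrC subrK.
Qed.

Lemma Gen0 gs : Gen gs 0.
Proof.
exists (fun _ => 0); rewrite big1 ?subrr; first exact: Z0.
by move=> j _; rewrite mul0r.
Qed.

Lemma GenD gs f g : Gen gs f -> Gen gs g -> Gen gs (f + g).
Proof.
move=> [c1 h1] [c2 h2]; exists (fun j => c1 j + c2 j).
under eq_bigr do rewrite mulrDl.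
rewrite big_split /=.
set s1 := \sum_(j < _) _; set s2 := \sum_(j < _) _.
have -> : f + g - (s1 + s2) = (f - s1) + (g - s2) by ring.
exact: ZD.
Qed.

Lemma GenM gs h f : Gen gs f -> Gen gs (h * f).
Proof.
move=> [c hc]; exists (fun j => h * c j).
under eq_bigr do rewrite -mulrA.
rewrite -mulr_sumr -mulrBr; exact: ZM.
Qed.

Lemma GenZ gs a f : Gen gs f -> Gen gs (a *: f).
Proof. by rewrite -mul_mpolyC; apply: GenM. Qed.

Lemma Gen_gen gs j : (j < size gs)%N -> Gen gs gs`_j.
Proof.
move=> hj; exists (fun i : 'I_(size gs) => (i == Ordinal hj)%:R).
rewrite (bigD1 (Ordinal hj)) //= eqxx mul1r big1 ?addr0 ?subrr; first exact: Z0.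
by move=> i /negbTE ->; rewrite mul0r.
Qed.

Lemma Gen_cong gs f g : Z (f - g) -> Gen gs g -> Gen gs f.
Proof.
move=> hfg [c hc]; exists c.
set s := \sum_(j < _) _.
have -> : f - s = (f - g) + (g - s) by ring.
exact: ZD.
Qed.

Lemma Gen_sum gs (I : Type) (s : seq I) (Q : pred I) (F : I -> P) :
  (forall i, Q i -> Gen gs (F i)) -> Gen gs (\sum_(i <- s | Q i) F i).
Proof. by move=> h; apply: (big_ind (Gen gs)) => //; [exact: Gen0 | exact: GenD]. Qed.

Lemma Gen_mul gs hs x y : Gen gs x -> Gen hs y ->
  (forall j i, (j < size gs)%N -> (i < size hs)%N -> Z (gs`_j * hs`_i)) -> Z (x * y).
Proof.
move=> [c hc] [d hd] h.
set sx := \sum_(j < _) _ in hc; set sy := \sum_(j < _) _ in hd.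
have -> : x * y = (x - sx) * y + sx * (y - sy) + sx * sy by ring.
apply: ZD; first apply: ZD; [exact: ZMr | exact: ZM |].
rewrite /sx mulr_suml; apply: Zsum => j _; rewrite /sy mulr_sumr; apply: Zsum => i _.
have -> : c j * gs`_j * (d i * hs`_i) = (c j * d i) * (gs`_j * hs`_i) by ring.
by apply: ZM; apply: h.
Qed.

Lemma annA_iff G f : annA e G f <-> Z (f * G).
Proof.
split.
  move=> h; apply: h; apply/genIdeal_Gen; exact: (Gen_gen (gs := [:: G]) (j := 0)).
move=> h y /genIdeal_Gen [c hc]; move: hc; rewrite big_ord1 /= => hc.
have -> : f * y = f * (y - c ord0 * G) + c ord0 * (f * G) by ring.
by apply: ZD; apply: ZM.
Qed.

Lemma Gen_tau gs hs x : Gen gs x -> (forall j, (j < size gs)%N -> Gen hs (tau e gs`_j)) ->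
  Gen hs (tau e x).
Proof.
move=> [c hc] h; apply: (Gen_cong (g := \sum_(j < size gs) tau e (c j) * tau e gs`_j)).
  by under eq_bigr do rewrite -tauM; rewrite -(tau_sum e) -tauB; apply: Z_tau.
by apply: Gen_sum => j _; apply: GenM; apply: h.
Qed.

End GenSec.
Section Pigeon.
Variable R : finComUnitRingType.
Variable r : nat.
Variable e : 'I_r -> nat.
Hypothesis he0 : forall k, (0 < e k)%N.
Local Notation P := {mpoly R[r]}.
Local Notation Z := (@inI R r e).

Lemma pigeon (g : P) : exists n1 n2, (n1 < n2)%N /\ Z (g ^+ n2 - g ^+ n1).
Proof.
pose B := 'X_{1..r < Kb e}.
pose FF := {ffun B -> R}.
pose F := fun n : 'I_(#|{: FF}|).+1 => [ffun m : B => (red e (g ^+ n))@_(val m)] : FF.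
have : ~~ injectiveb F.
  apply/negP => /injectiveP /leq_card; by rewrite card_ord ltnn.
case/injectivePn => i [j] hij hF.
have hr : red e (g ^+ i) = red e (g ^+ j).
  apply/mpolyP => m; case: (boolP (mdeg m < Kb e)%N) => hm.
    by have := congr1 (fun f : FF => f (Sub m hm)) hF; rewrite /= !ffunE.
  rewrite !memN_msupp_eq0 //; apply/negP => /(red_supp_deg he0); by rewrite (negbTE hm).
have hZ : Z (g ^+ j - g ^+ i).
  have -> : g ^+ j - g ^+ i = (g ^+ j - red e (g ^+ j)) - (g ^+ i - red e (g ^+ i))
     + (red e (g ^+ j) - red e (g ^+ i)) by ring.
  apply: ZD; first by apply: ZB; exact: Z_red.
  rewrite hr subrr; exact: Z0.
case: (ltngtP i j) => h.
- by exists i, j.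
- exists j, i; split => //; have -> : g ^+ i - g ^+ j = - (g ^+ j - g ^+ i) by ring.
  exact: ZN.
- by case/eqP: hij; apply: val_inj.
Qed.
End Pigeon.

Section Algebra.
Variable R : finComUnitRingType.
Variable r : nat.
Variable e : 'I_r -> nat.
Hypothesis he0 : forall k, (0 < e k)%N.
Local Notation P := {mpoly R[r]}.
Local Notation Z := (@inI R r e).
Variable T : nat.
Variable G : 'I_T -> P.
Hypothesis hintZ : forall f, (forall i, Z (f * G i)) -> Z f.
Hypothesis hcomZ : forall i j : 'I_T, (i < j)%N ->
  exists u v, [/\ Z (u * G i), Z (v * G j) & Z (u + v - 1)].

Lemma sep i j : i != j -> exists w, Z (w * G j) /\ Z ((1 - w) * G i).
Proof.
move=> hij; case: (ltngtP i j) => h.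
- have [u [v [hu hv huv]]] := hcomZ h; exists v; split => //.
  have -> : (1 - v) * G i = u * G i - (u + v - 1) * G i by ring.
  by apply: ZB => //; apply: ZMr.
- have [u [v [hu hv huv]]] := hcomZ h; exists u; split => //.
  have -> : (1 - u) * G i = v * G i - (u + v - 1) * G i by ring.
  by apply: ZB => //; apply: ZMr.
- by case/eqP: hij; apply: val_inj.
Qed.

Lemma GG i j : i != j -> Z (G i * G j).
Proof.
move=> /sep [w [h1 h2]].
have -> : G i * G j = G i * (w * G j) + G j * ((1 - w) * G i) by ring.
by apply: ZD; apply: ZM.
Qed.

Lemma eps_ex i : exists E, (forall j, j != i -> Z (E * G j)) /\ Z ((1 - E) * G i).
Proof.
suff : forall s : seq 'I_T, exists E,
    (forall j, j \in s -> j != i -> Z (E * G j)) /\ Z ((1 - E) * G i).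
  move=> /(_ (enum 'I_T)) [E [h1 h2]]; exists E; split => // j; apply: h1.
  by rewrite mem_enum.
elim => [|j s [E [h1 h2]]].
  by exists 1; split => //; rewrite subrr mul0r; exact: Z0.
case: (eqVneq j i) => [->|hji].
  by exists E; split => // k; rewrite in_cons => /orP [/eqP -> /eqP //|]; apply: h1.
have hij : i != j by rewrite eq_sym.
have [w [hw1 hw2]] := sep hij.
exists (E * w); split.
  move=> k; rewrite in_cons => /orP [/eqP ->|hk] hki.
    by rewrite -mulrA; apply: ZM.
  have -> : E * w * G k = w * (E * G k) by ring.
  by apply: ZM; apply: h1.
have -> : (1 - E * w) * G i = (1 - E) * G i + E * ((1 - w) * G i) by ring.
by apply: ZD => //; apply: ZM.
Qed.

Lemma E_ex : exists E : 'I_T -> P, forall i,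
  (forall j, j != i -> Z (E i * G j)) /\ Z ((1 - E i) * G i).
Proof. exact: (fin_all_exists eps_ex). Qed.

Section WithE.
Variable E : 'I_T -> P.
Hypothesis hE : forall i, (forall j, j != i -> Z (E i * G j)) /\ Z ((1 - E i) * G i).

Lemma sumE : Z (\sum_i E i - 1).
Proof.
apply: hintZ => k; rewrite (bigD1 k) //=.
have -> : (E k + \sum_(i | i != k) E i - 1) * G k =
   - ((1 - E k) * G k) + \sum_(i | i != k) (E i * G k).
  by rewrite -mulr_suml; ring.
apply: ZD; first by apply: ZN; case: (hE k).
by apply: Zsum => i hi; case: (hE i) => h _; apply: h; rewrite eq_sym.
Qed.

Lemma EE i j : i != j -> Z (E i * E j).
Proof.
move=> hij; apply: hintZ => k; case: (eqVneq k i) => [->|hki].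
  have -> : E i * E j * G i = E i * (E j * G i) by ring.
  by apply: ZM; case: (hE j) => h _; apply: h.
have -> : E i * E j * G k = E j * (E i * G k) by ring.
by apply: ZM; case: (hE i) => h _; apply: h.
Qed.

Lemma Eidem i : Z (E i - E i * E i).
Proof.
have := sumE; rewrite (bigD1 i) //= => hs.
have -> : E i - E i * E i =
  - (E i * (E i + \sum_(j | j != i) E j - 1)) + \sum_(j | j != i) E i * E j.
  by rewrite -mulr_sumr; ring.
apply: ZD; first by apply: ZN; apply: ZM.
by apply: Zsum => j hj; apply: EE; rewrite eq_sym.
Qed.

Lemma cancelG i z k : (forall j, j != i -> Z (z * G j)) -> Z (z * G i ^+ k) -> Z z.
Proof.
move=> hz; elim: k => [|k IH]; first by rewrite expr0 mulr1.
move=> h; apply: IH; apply: hintZ => j; case: (eqVneq j i) => [->|hji].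
  by rewrite -mulrA -exprSr.
have -> : z * G i ^+ k * G j = G i ^+ k * (z * G j) by ring.
by apply: ZM; apply: hz.
Qed.

Lemma E_gen i : exists g, Z (E i - g * G i).
Proof.
have [n1 [n2 [hn hZ]]] := pigeon he0 (G i).
exists (E i * G i ^+ (n2 - n1).-1).
have hd : G i ^+ (n2 - n1) = G i ^+ (n2 - n1).-1 * G i.
  by rewrite -exprSr prednK // subn_gt0.
pose z := E i - E i * G i ^+ (n2 - n1).
have -> : E i - E i * G i ^+ (n2 - n1).-1 * G i = z by rewrite /z hd mulrA.
apply: (@cancelG i z n1).
  move=> j hj; have -> : z * G j = (1 - G i ^+ (n2 - n1)) * (E i * G j) by rewrite /z; ring.
  by apply: ZM; case: (hE i) => h _; apply: h.
have -> : z * G i ^+ n1 = - (E i * (G i ^+ n2 - G i ^+ n1)).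
  rewrite /z; have -> : G i ^+ n2 = G i ^+ (n2 - n1) * G i ^+ n1.
    by rewrite -exprD subnK // ltnW.
  ring.
by apply: ZN; apply: ZM.
Qed.

End WithE.
End Algebra.
Section Chain.
Variable R : finComUnitRingType.
Variable a : R.
Variable t : nat.
Hypothesis hch : forall x : R, x \isn't a GRing.unit <-> exists y, x = a * y.
Hypothesis hat : a ^+ t = 0.
Hypothesis hat1 : a ^+ t.-1 != 0.
Hypothesis ht : (0 < t)%N.

Lemma chain_dec n (c : R) : (exists y, c = a ^+ n * y) \/
  (exists m u, [/\ (m < n)%N, u \is a GRing.unit & c = a ^+ m * u]).
Proof.
elim: n => [|n [[y hy]|[m [u [hm hu hc]]]]].
- by left; exists c; rewrite expr0 mul1r.
- case: (boolP (y \is a GRing.unit)) => hyu.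
    by right; exists n, y; split.
  have [y' hy'] := (hch y).1 hyu.
  by left; exists y'; rewrite hy hy' mulrA -exprSr.
- by right; exists m, u; split => //; apply: ltnW.
Qed.

Lemma ann_a (c : R) k : (k <= t)%N -> c * a ^+ k = 0 -> exists c', c = a ^+ (t - k) * c'.
Proof.
move=> hk hc; case: (chain_dec t c) => [[y hy]|[m [u [hm hu hcu]]]].
  by exists 0; rewrite mulr0 hy hat mul0r.
have h0 : a ^+ (m + k) = 0.
  have h1 : a ^+ (m + k) * u = 0.
    by rewrite exprD -mulrA (mulrC _ u) mulrA -hcu.
  by rewrite -(mulrK hu (a ^+ (m + k))) h1 mul0r.
have hmk : (t <= m + k)%N.
  rewrite leqNgt; apply/negP => hlt; move: hat1.
  have -> : t.-1 = ((m + k) + (t.-1 - (m + k)))%N by lia.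
  by rewrite exprD h0 mul0r eqxx.
exists (a ^+ (m + k - t) * u); rewrite hcu mulrA -exprD; congr (a ^+ _ * _); lia.
Qed.

Variable r : nat.
Variable e : 'I_r -> nat.
Local Notation P := {mpoly R[r]}.
Local Notation Z := (@inI R r e).

Lemma ann_poly (x : P) k : (k <= t)%N -> Z (a ^+ k *: x) ->
  exists x', Z (x - a ^+ (t - k) *: x').
Proof.
move=> hk hZ.
have h0 : forall m, (red e x)@_m * a ^+ k = 0.
  move=> m; have := red_I hZ; rewrite redZ => /(congr1 (mcoeff m)).
  by rewrite mcoeffZ mcoeff0 mulrC.
pose cf m := odflt 0 [pick c' | (red e x)@_m == a ^+ (t - k) * c'].
have hcf : forall m, (red e x)@_m = a ^+ (t - k) * cf m.
  move=> m; rewrite /cf; case: pickP => [c' /eqP //|hn] /=.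
  have [c' hc'] := ann_a hk (h0 m).
  by have := hn c'; rewrite hc' eqxx.
exists (\sum_(m <- msupp (red e x)) cf m *: 'X_[m]).
rewrite scaler_sumr.
under eq_bigr do rewrite scalerA -hcf.
rewrite -mpolyE; exact: Z_red.
Qed.

End Chain.
Section Main.
Variable R : finComUnitRingType.
Variable a : R.
Variable t : nat.
Variable r : nat.
Variable e : 'I_r -> nat.
Hypothesis he0 : forall k, (0 < e k)%N.
Hypothesis hch : forall x : R, x \isn't a GRing.unit <-> exists y, x = a * y.
Hypothesis ht : (0 < t)%N.
Hypothesis hat : a ^+ t = 0.
Hypothesis hat1 : a ^+ t.-1 != 0.
Variable G : 'I_t.+1 -> {mpoly R[r]}.
Local Notation P := {mpoly R[r]}.
Local Notation Z := (@inI R r e).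
Hypothesis hintZ : forall f, (forall i, Z (f * G i)) -> Z f.
Hypothesis hcomZ : forall i j : 'I_t.+1, (i < j)%N ->
  exists u v, [/\ Z (u * G i), Z (v * G j) & Z (u + v - 1)].

Definition Kseq := [seq a ^+ i.-1 *: G (inord i) | i <- iota 1 t].
Definition Mseq := G ord0 :: [seq a ^+ i *: G (inord (t + 1 - i)) | i <- iota 1 t.-1].

Lemma Ksz : size Kseq = t. Proof. by rewrite size_map size_iota. Qed.
Lemma Msz : size Mseq = t. Proof. by rewrite /= size_map size_iota prednK. Qed.

Lemma Kn s : (s < t)%N -> Kseq`_s = a ^+ s *: G (inord s.+1).
Proof. by move=> hs; rewrite (nth_map 0) ?size_iota // nth_iota. Qed.

Lemma M0 : Mseq`_0 = G ord0. Proof. by []. Qed.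

Lemma Mn s : (s < t.-1)%N -> Mseq`_s.+1 = a ^+ s.+1 *: G (inord (t - s)).
Proof.
move=> hs; rewrite /= (nth_map 0) ?size_iota // nth_iota // add1n.
by congr (_ *: G (inord _)); lia.
Qed.

Lemma inord_neq i j : (i <= t)%N -> (j <= t)%N -> i != j ->
  (inord i : 'I_t.+1) != inord j.
Proof.
move=> hi hj hij; apply/negP => /eqP /(congr1 val).
by rewrite /= !inordK // => /eqP; rewrite (negbTE hij).
Qed.

Lemma scal_mul (x y : P) (c d : R) : (c *: x) * (d *: y) = (c * d) *: (x * y).
Proof. by rewrite -!mul_mpolyC mpolyCM; ring. Qed.

Lemma annKM j i : (j < size Mseq)%N -> (i < size Kseq)%N -> Z (Mseq`_j * Kseq`_i).
Proof.
rewrite Msz Ksz => hj hi; rewrite Kn //.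
case: j hj => [|s] hs.
  rewrite M0 -scalerAr; apply: ZZ; apply: (GG hcomZ).
  have -> : (ord0 : 'I_t.+1) = inord 0 by apply: val_inj; rewrite /= inordK.
  by apply: inord_neq.
rewrite Mn; last by lia.
rewrite scal_mul; case: (eqVneq (t - s)%N i.+1) => [hts|hne].
  by rewrite -exprD (_ : (s.+1 + i = t)%N) ?hat ?scale0r; [exact: Z0 | lia].
by apply: ZZ; apply: (GG hcomZ); apply: inord_neq => //; lia.
Qed.


Lemma AnnKM x : (forall s, (s < t)%N -> Z (x * Kseq`_s)) -> Gen e Mseq x.
Proof.
move=> hx.
have [E hE] := E_ex hcomZ.
apply: (Gen_cong (g := \sum_i x * E i)).
  have -> : x - \sum_i x * E i = - (x * (\sum_i E i - 1)) by rewrite -mulr_sumr; ring.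
  by apply: ZN; apply: ZM; apply: (sumE hintZ hE).
apply: Gen_sum => i _.
have [g hg] := E_gen he0 hintZ hE i.
case hi: (val i) => [|s].
  have hi0 : G ord0 = G i by congr G; apply: val_inj.
  apply: (Gen_cong (g := (x * g) * Mseq`_0)).
    rewrite M0 hi0.
    have -> : x * E i - x * g * G i = x * (E i - g * G i) by ring.
    by apply: ZM.
  by apply: GenM; apply: Gen_gen; rewrite Msz.
have hst : (s < t)%N by have := ltn_ord i; rewrite hi.
have hGi : G (inord s.+1) = G i by rewrite -hi inord_val.
pose y := x * E i.
have hy : Z (a ^+ s *: y).
  have := hx s hst; rewrite Kn // hGi => hxs.
  have -> : a ^+ s *: y = g * (x * (a ^+ s *: G i)) + a ^+ s *: (x * (E i - g * G i)).
    by rewrite /y -!mul_mpolyC; ring.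
  by apply: ZD; [apply: ZM | apply: ZZ; apply: ZM].
have [y' hy'] := ann_poly hch hat hat1 ht (ltnW hst) hy.
have hyE : Z (y - y * E i).
  have -> : y - y * E i = x * (E i - E i * E i) by rewrite /y; ring.
  by apply: ZM; apply: (Eidem hintZ hE).
pose A := a ^+ (t - s) *: y'.
have key : Z (y - (y' * g) * (a ^+ (t - s) *: G i)).
  have -> : y - (y' * g) * (a ^+ (t - s) *: G i) =
     (y - y * E i) + (y - A) * E i + A * (E i - g * G i).
    by rewrite /A -!mul_mpolyC; ring.
  by apply: ZD; [apply: ZD => //; apply: ZMr | apply: ZM].
case: s hi hst hGi hy y' hy' A key => [|s'] hi hst hGi hy y' hy' A key.
  apply: (Gen_cong (g := 0)); last exact: Gen0.
  by move: key; rewrite subn0 hat scale0r mulr0 !subr0.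
apply: (Gen_cong (g := (y' * g) * Mseq`_(t - s'.+1))) => //.
  have -> : (t - s'.+1 = (t - s'.+2).+1)%N by lia.
  rewrite Mn; last by lia.
  have -> : ((t - s'.+2).+1 = t - s'.+1)%N by lia.
  have -> : (t - (t - s'.+2) = s'.+2)%N by lia.
  by rewrite hGi.
by apply: GenM; apply: Gen_gen; rewrite Msz; lia.
Qed.

Variable K : P -> Prop.
Hypothesis hK : forall f, K f <-> genIdeal e Kseq f.

Lemma Mtau : tau e (G ord0) :: [seq a ^+ i *: tau e (G (inord (t + 1 - i))) | i <- iota 1 t.-1]
  = map (tau e) Mseq.
Proof.
rewrite /Mseq /= -map_comp; congr (_ :: _); apply: eq_map => i /=.
by rewrite tauZ.
Qed.

Lemma perp_main f : perpA e K f <->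
  genIdeal e (tau e (G ord0) :: [seq a ^+ i *: tau e (G (inord (t + 1 - i))) | i <- iota 1 t.-1]) f.
Proof.
rewrite Mtau; split.
  move=> hperp; apply/genIdeal_Gen.
  have hg : Gen e Mseq (tau e f).
    apply: AnnKM => s hs; apply: (Z_of_D he0) => m.
    rewrite (D1 he0) -mulrA mulrC -(D1 he0) DC -(dotA_D he0); apply: hperp.
    apply/hK/genIdeal_Gen; rewrite mulrC; apply: GenM; apply: Gen_gen; by rewrite Ksz.
  have hg2 : Gen e (map (tau e) Mseq) (tau e (tau e f)).
    apply: (Gen_tau hg) => j hj; rewrite -(nth_map 0 0 (tau e)) //.
    by apply: Gen_gen; rewrite size_map.
  apply: (Gen_cong _ hg2).
  have -> : f - tau e (tau e f) = - (tau e (tau e f) - f) by ring.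
  by apply: ZN; apply: (tautau he0).
move=> hgen c hc.
have hg := (genIdeal_Gen _ _ _).1 hgen.
have htf : Gen e Mseq (tau e f).
  apply: (Gen_tau hg) => j; rewrite size_map => hj; rewrite (nth_map 0) //.
  apply: (Gen_cong _ (Gen_gen e hj)); exact: (tautau he0).
have hc' : Gen e Kseq c by apply/genIdeal_Gen/hK.
have hZ := Gen_mul htf hc' annKM.
rewrite (dotA_D he0) (D1 he0); apply: L_Z.
have -> : f * tau e c = tau e (tau e f * c) - (tau e (tau e f) - f) * tau e c.
  by rewrite tauM; ring.
apply: ZB; first exact: Z_tau.
by apply: ZMr; apply: (tautau he0).
Qed.

End Main.

Theorem mainTheorem9 (R : finComUnitRingType) (a : R) (t p : nat)
  (r : nat) (e : 'I_r -> nat)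
  (hchain : chain_ring_max a)
  (ht : (0 < t)%N) (hat : a ^+ t = 0) (hat1 : a ^+ t.-1 != 0)
  (hp : prime p) (hpchar : (p%:R : R) \isn't a GRing.unit)
  (he : forall k, (0 < e k)%N /\ ~~ (p %| e k)%N)
  (K : {mpoly R[r]} -> Prop) (G : 'I_t.+1 -> {mpoly R[r]})
  (hint : forall f, (forall i, annA e (G i) f) -> inI e f)
  (hcomax : forall i j : 'I_t.+1, (i < j)%N -> annComax e (G i) (G j))
  (hK : forall f, K f <->
        genIdeal e [seq a ^+ i.-1 *: G (inord i) | i <- iota 1 t] f) :
  (forall f, perpA e K f <->
     genIdeal e (tau e (G ord0) ::
        [seq a ^+ i *: tau e (G (inord (t + 1 - i))) | i <- iota 1 t.-1]) f)
  /\ (forall f, (forall i, annA e (tau e (G i)) f) -> inI e f)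
  /\ (forall i j : 'I_t.+1, (i < j)%N -> annComax e (tau e (G i)) (tau e (G j))).
Proof.
have he0 : forall k, (0 < e k)%N by move=> k; case: (he k).
have hch := hchain.2.
have hintZ : forall f, (forall i, inI e (f * G i)) -> inI e f.
  by move=> f h; apply: hint => i; apply/annA_iff.
have hcomZ : forall i j : 'I_t.+1, (i < j)%N ->
    exists u v, [/\ inI e (u * G i), inI e (v * G j) & inI e (u + v - 1)].
  move=> i j hij; have [u [v [hu [hv huv]]]] := hcomax i j hij.
  by exists u, v; split => //; apply/annA_iff.
split; first exact: (perp_main he0 hch ht hat hat1 hintZ hcomZ hK).
split.
  move=> f h.
  have hZ : inI e (tau e f).
    apply: hintZ => i; have := (annA_iff _ _ _).1 (h i) => /Z_tau; rewrite tauM => hz.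
    have -> : tau e f * G i = tau e f * tau e (tau e (G i)) - tau e f * (tau e (tau e (G i)) - G i)
      by ring.
    by apply: ZB => //; apply: ZM; apply: (tautau he0).
  have -> : f = tau e (tau e f) - (tau e (tau e f) - f) by ring.
  by apply: ZB; [apply: Z_tau | apply: (tautau he0)].
move=> i j hij; have [u [v [hu [hv huv]]]] := hcomax i j hij.
exists (tau e u), (tau e v); split; [|split].
- by apply/annA_iff; rewrite -tauM; apply: Z_tau; apply/annA_iff.
- by apply/annA_iff; rewrite -tauM; apply: Z_tau; apply/annA_iff.
- by rewrite -tauD -(@tau1 R r e) -tauB; apply: Z_tau.
Qed.
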